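(* Let $i\ge0$, let $\mathbf{e}_i$ be a 1-dimensional error pattern at level $i$, let $\mathbf{e}_{i+1}$ be a 1-dimensional preimage of $\mathbf{e}_i$, and let $P_{i+1}$ be the number of paths of $\mathbf{e}_{i+1}$. Then $\mathrm{wt}(\mathbf{e}_{i+1})+P_{i+1}\ge2\,\mathrm{wt}(\mathbf{e}_i)$.
   Context: 1-dimensional model. For $j\ge0$, the line at level $j$ is the cycle with vertex set $\mathbb{Z}/2^j\mathbb{Z}$ and edges $\{v,v+1\}$, $v\in\mathbb{Z}/2^j\mathbb{Z}$ (for $j=0$, one vertex with a loop edge). A 1-dimensional error pattern at level $j$ is a subset of these edges; $\mathrm{wt}$ is its number of edges; its syndrome is the set of vertices incident to an odd number of its edges. The number of paths of a pattern is the number of connected components (maximal runs of consecutive edges) of the pattern, except that it is $0$ when the pattern is the whole cycle. At level $j+1$, block $m\in\mathbb{Z}/2^j\mathbb{Z}$ consists of the left edge $\{2m,2m+1\}$ and right edge $\{2m+1,2m+2\}$ and corresponds to the edge $\{m,m+1\}$ at level $j$. One reduction stage applied to a pattern $\mathbf{f}$ at level $j+1$ with syndrome $S$: (a) for every block, if $2m+1,2m+2\in S$, flip (add mod 2) the right edge and remove both from $S$; (b) then for every block, if $2m+1$ is still in $S$, flip the left edge. In the resulting pattern $\mathbf{f}'$ each block contains $0$ or $2$ edges; the image of $\mathbf{f}$ is the pattern at level $j$ containing $\{m,m+1\}$ iff block $m\subseteq\mathbf{f}'$. A pattern $\mathbf{f}$ at level $j+1$ is a 1-dimensional preimage of $\mathbf{g}$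 at level $j$ if the image of $\mathbf{f}$ is $\mathbf{g}$. *)

(* Defs.v *)
From mathcomp Require Import all_boot.
Set Implicit Arguments. Unset Strict Implicit. Unset Printing Implicit Defensive.

(* Level j: cycle Z/2^j. Vertices and edges are both indexed by 'I_(2^j);
   edge v is {v, v+1 mod 2^j} (for j = 0: the single loop at vertex 0).
   An error pattern at level j is a set of edges {set 'I_(2^j)}. *)

Lemma pow2_gt0 (j : nat) : 0 < 2 ^ j.
Proof. by rewrite expn_gt0. Qed.

Definition ordm (j k : nat) : 'I_(2 ^ j) := Ordinal (ltn_pmod k (pow2_gt0 j)).

Definition wt (j : nat) (f : {set 'I_(2 ^ j)}) : nat := #|f|.

(* syndrome: vertices incident to an odd number of edges of f;
   vertex v is incident to edges v and v-1 (a loop counts twice) *)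
Definition syndrome (j : nat) (f : {set 'I_(2 ^ j)}) : {set 'I_(2 ^ j)} :=
  [set v : 'I_(2 ^ j) | (ordm j v \in f) (+) (ordm j (v + 2 ^ j - 1) \in f)].

Definition adj (j : nat) (f : {set 'I_(2 ^ j)}) : rel 'I_(2 ^ j) :=
  fun u v => [&& u \in f, v \in f &
     (val v == (u + 1) %% 2 ^ j) || (val u == (v + 1) %% 2 ^ j)].

Definition npaths (j : nat) (f : {set 'I_(2 ^ j)}) : nat :=
  if f == [set: 'I_(2 ^ j)] then 0 else n_comp (adj f) (mem f).

(* One reduction stage from level j+1 to level j.  Block m (m < 2^j) has
   left edge 2m and right edge 2m+1. *)
Section Reduction.
Variables (j : nat) (f : {set 'I_(2 ^ j.+1)}).

Let S := syndrome f.

Definition condA (m : nat) : bool :=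
  (ordm j.+1 (2 * m + 1) \in S) && (ordm j.+1 (2 * m + 2) \in S).

(* step (b): 2m+1 still in S after step (a) *)
Definition condB (m : nat) : bool :=
  (ordm j.+1 (2 * m + 1) \in S) && ~~ condA m.

Definition reduced : {set 'I_(2 ^ j.+1)} :=
  [set e : 'I_(2 ^ j.+1) |
     (e \in f) (+) (if odd e then condA e./2 else condB e./2)].

Definition image : {set 'I_(2 ^ j)} :=
  [set m : 'I_(2 ^ j) |
     (ordm j.+1 (2 * m) \in reduced) && (ordm j.+1 (2 * m + 1) \in reduced)].

End Reduction.

Definition is_preimage (j : nat) (f : {set 'I_(2 ^ j.+1)}) (g : {set 'I_(2 ^ j)}) :=
  image f = g.

(* Main.v *)
Require Import Defs.
From mathcomp Require Import all_boot zify.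
Set Warnings "-notation-overridden".
Set Implicit Arguments. Unset Strict Implicit.

Lemma ordm_idem j k : ordm j (ordm j k) = ordm j k.
Proof. by apply: val_inj; rewrite /= modn_mod. Qed.

Lemma ordm_val j (x : 'I_(2 ^ j)) : ordm j x = x.
Proof. by apply: val_inj; rewrite /= modn_small. Qed.

Lemma ordm_pred j k : ordm j (ordm j (k + 1) + 2 ^ j - 1) = ordm j k.
Proof.
apply: val_inj => /=.
have N0 := pow2_gt0 j.
rewrite -addnBA // modnDml -addnA subnKC //.
by rewrite modnDr.
Qed.

Lemma block_fact j (f : {set 'I_(2 ^ j.+1)}) (m : 'I_(2 ^ j)) : m \in Defs.image f ->
 ((ordm j.+1 (2*m) \in f) || ((ordm j.+1 (2*m) \notin f) && (ordm j.+1 (2*m+1) \in f))) &&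
 ((ordm j.+1 (2*m+1) \in f) || ((ordm j.+1 (2*m+1) \notin f) && (ordm j.+1 (2*m+1+1) \in f))).
Proof.
have hm := ltn_ord m.
have h0 : 2 * m < 2 ^ j.+1 by rewrite expnS; lia.
have h1 : 2 * m + 1 < 2 ^ j.+1 by rewrite expnS; lia.
rewrite inE /reduced !inE /= (modn_small h0) (modn_small h1) mul2n addn1 /= odd_double /= uphalf_double doubleK.
rewrite /condB /condA /syndrome !inE !ordm_idem.
rewrite (_ : 2 * m + 2 = 2 * m + 1 + 1); last by rewrite -addnA.
rewrite !ordm_pred -!mul2n -!(addn1 (2 * m)).
case: (ordm j.+1 (2 * m) \in f); case: (ordm j.+1 (2 * m + 1) \in f);
  by case: (ordm j.+1 (2 * m + 1 + 1) \in f).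
Qed.

Lemma mod_pred N a b : 0 < N -> (a == b + 1 %[mod N]) -> (a + N - 1 == b %[mod N]).
Proof.
move=> N0 H; rewrite -(eqn_modDr 1) subnK; last by lia.
by rewrite modnDr.
Qed.

Lemma ord_eq j (x : 'I_(2 ^ j)) k : nat_of_ord x = k %% 2 ^ j -> ordm j k = x.
Proof. by move=> H; apply: val_inj; rewrite /= H. Qed.

Definition runs j (f : {set 'I_(2 ^ j)}) :=
  [set h : 'I_(2 ^ j) | (h \notin f) && (ordm j (h + 1) \in f)].

Definition inR j (f : {set 'I_(2 ^ j)}) (s y : 'I_(2 ^ j)) :=
  exists k, y = ordm j (s + k) /\ forall i, i <= k -> ordm j (s + i) \in f.

Lemma inR_step j (f : {set 'I_(2 ^ j)}) (s x z : 'I_(2 ^ j)) :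
  s \in f -> ordm j (s + 2 ^ j - 1) \notin f -> inR f s x -> adj f x z -> inR f s z.
Proof.
move=> sf sn [k [-> Hk]] /and3P[_ zf /orP[/eqP Ez | /eqP Ex]].
- have Ez' : nat_of_ord z = (s + k.+1) %% 2 ^ j.
    by rewrite (Ez : nat_of_ord z = _) /= modnDml addn1 addnS.
  exists k.+1; split; first by rewrite (ord_eq Ez').
  move=> i; rewrite leq_eqVlt => /orP[/eqP -> | ]; last by apply: Hk.
  by rewrite (ord_eq Ez').
- move: Ex => /= Ex.
  case: k Hk Ex => [|k] Hk Ex.
  + exfalso; move: sn; rewrite /= addn0 modn_small // in Ex.
    have -> : ordm j (s + 2 ^ j - 1) = z; last by rewrite zf.
    apply: ord_eq; rewrite -(modn_small (ltn_ord z)); apply/eqP.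
    rewrite eq_sym; apply: mod_pred; [exact: pow2_gt0 | by rewrite {1}Ex modn_mod].
  + exists k; split; last by move=> i ik; apply: Hk; lia.
    apply: esym; apply: ord_eq; rewrite -(modn_small (ltn_ord z)); apply/eqP.
    by rewrite eq_sym -(eqn_modDr 1) addn1 -addnS Ex.
Qed.

Lemma inR_connect j (f : {set 'I_(2 ^ j)}) (s y : 'I_(2 ^ j)) :
  s \in f -> ordm j (s + 2 ^ j - 1) \notin f -> connect (adj f) s y -> inR f s y.
Proof.
move=> sf sn /connectP[p Hp ->].
have R0 : inR f s s.
  by exists 0; split; [rewrite addn0 ordm_val | move=> i; rewrite leqn0 => /eqP ->; rewrite addn0 ordm_val].
have G : forall x, inR f s x -> path (adj f) x p -> inR f s (last x p).
  elim: p {Hp} => [|z p IH] x Rx //= /andP[axz Hp].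
  apply: IH Hp; exact: inR_step sf sn Rx axz.
exact: G.
Qed.


Lemma ordm_addmod j a b : ordm j (ordm j a + b) = ordm j (a + b).
Proof. by apply: val_inj; rewrite /= modnDml. Qed.

Lemma ordm_addmod' j a b : ordm j (a %% 2 ^ j + b) = ordm j (a + b).
Proof. by apply: val_inj; rewrite /= modnDml. Qed.

Lemma runstart_uniq j (f : {set 'I_(2 ^ j)}) (s s' : 'I_(2 ^ j)) :
  ordm j (s' + 2 ^ j - 1) \notin f -> inR f s s' -> s' = s.
Proof.
move=> sn [[|k] [E Hk]]; first by rewrite E addn0 ordm_val.
have : ordm j (s + k) \in f by apply: Hk.
have -> : ordm j (s + k) = ordm j (s' + 2 ^ j - 1); last by rewrite (negbTE sn).
apply: val_inj => /=; apply/eqP; rewrite eq_sym; apply: mod_pred; first exact: pow2_gt0.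
by rewrite E /= modn_mod addn1 addnS.
Qed.

Lemma adj_sym j (f : {set 'I_(2 ^ j)}) : symmetric (adj f).
Proof. by move=> u v; rewrite /adj andbCA orbC. Qed.

Lemma runs_le j (f : {set 'I_(2 ^ j)}) : #|runs f| <= npaths f.
Proof.
rewrite /npaths; case: ifP => [/eqP Ef | _].
  rewrite leqn0 cards_eq0; apply/eqP/setP => h.
  by rewrite !inE Ef !inE.
have symE := sym_connect_sym (adj_sym f).
have RS : forall h, h \in runs f ->
   ordm j (h + 1) \in f /\ ordm j (ordm j (h + 1) + 2 ^ j - 1) \notin f.
  move=> h; rewrite inE => /andP[hn hs]; split => //.
  by rewrite ordm_pred ordm_val.
pose F (h : 'I_(2 ^ j)) := root (adj f) (ordm j (h + 1)).
rewrite -(card_in_imset (f := F)).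
  apply: subset_leq_card; apply/subsetP => r /imsetP[h hR ->].
  rewrite !inE; apply/andP; split; first exact: roots_root.
  have [s1 s2] := RS h hR.
  have [k [E Hk]] := inR_connect s1 s2 (connect_root (adj f) (ordm j (h + 1))).
  rewrite /F E; exact: Hk.
move=> h h' hR h'R /eqP; rewrite /F root_connect // => C.
have [s1 s2] := RS h hR; have [s1' s2'] := RS h' h'R.
have := runstart_uniq s2' (inR_connect s1 s2 C).
move=> /(congr1 val) /= /eqP; rewrite eqn_modDr => /eqP.
by rewrite !modn_small // => /val_inj.
Qed.

Theorem lemma2 (i : nat) (e_i : {set 'I_(2 ^ i)}) (e_i1 : {set 'I_(2 ^ i.+1)}) :
  is_preimage e_i1 e_i ->
  wt e_i1 + npaths e_i1 >= 2 * wt e_i.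
Proof.
rewrite /is_preimage /wt => Him.
pose G (p : 'I_(2 ^ i) * bool) := ordm i.+1 (2 * p.1 + p.2).
have Gsmall : forall p : 'I_(2 ^ i) * bool, 2 * p.1 + p.2 < 2 ^ i.+1.
  move=> [m b] /=; have := ltn_ord m; rewrite expnS; case: b => /=; lia.
have Ginj : injective G.
  move=> [m b] [m' b'] /(congr1 val); rewrite /= !modn_small; [|exact: (Gsmall (m', b'))|exact: (Gsmall (m, b))] => E.
  have Eb : b = b' by move: E; case: b; case: b' => /=; lia.
  subst b'; congr pair; apply: val_inj => /=; lia.
have cardT : #|[set G p | p in setX e_i [set: bool]]| = 2 * #|e_i|.
  by rewrite card_imset // cardsX cardsT card_bool mulnC.
rewrite -cardT.
apply: (leq_trans (subset_leq_card (B := e_i1 :|: runs e_i1) _)).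
  apply/subsetP => x /imsetP[[m b] /setXP[mI _] ->].
  rewrite -Him in mI; have /andP[B1 B2] := block_fact mI.
  rewrite /G /= !inE; case: b => /=.
    by rewrite ordm_addmod'.
  by rewrite addn0 ordm_addmod'.
by rewrite cardsU (leq_trans (leq_subr _ _)) // leq_add2l runs_le.
Qed.
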